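(* Let $\mathcal S$ be a nonempty self-dual, nested, chain-vanishing collection of nonempty subsets of a set $X$. Then $\sim_{\mathcal S}$ is an equivalence relation on $\mathcal S$ and the graph $\mathcal T_{\mathcal S}$ is a tree (connected, acyclic, without loops or multiple edges).
   Context: Fix a nonempty set $X$; $A^c:=X\setminus A$, $A^1:=A$, $A^{-1}:=A^c$. Sets $A,B\subseteq X$ are orthogonal, $A\perp B$, if $A\cap B=\emptyset$ and $A\ne B^c$. For a collection $\mathcal S$ of nonempty subsets of $X$ and $A,B\in\mathcal S$, $B$ is $\mathcal S$-maximally orthogonal to $A$ if $B\perp A$ and there is no $C\in\mathcal S$ with $C\perp A$ and $C\supsetneq B$; $[A]_{\mathcal S}:=\{A\}\cup\{B\in\mathcal S: B \text{ is } \mathcal S\text{-maximally orthogonal to } A\}$; $A\sim_{\mathcal S}B$ iff $A\in[B]_{\mathcal S}$. A chain is a sequence $(A_n)_{n\in\mathbb N}$ strictly increasing or strictly decreasing under inclusion; a decreasing (resp. increasing) chain is $\mathcal S$-vanishing if there is no $B\in\mathcal S$ with $B\subseteq A_n$ (resp. $B\cap A_n=\emptyset$) for all $n$; $\mathcal S$ is chain-vanishing if every chain of members of $\mathcal S$ is $\mathcal S$-vanishing. Sets $A,B$ are nested if some corner $A^i\cap B^j$ ($i,j\in\{-1,1\}$) is empty; $\mathcal S$ is nested if any two members are nested. $\mathcal S$ is self-dual if $A\in\mathcal S\Rightarrow A^c\in\mathcal S$. $\mathcal T_{\mathcal S}$ is the undirected graph with vertex set $\mathcal S/{\sim_{\mathcal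 S}}$ having an edge between $[A]_{\mathcal S}$ and $[A^c]_{\mathcal S}$ for every $A$ with $A,A^c\in\mathcal S$. *)

(* Defs.v *)
From Stdlib Require Import List Relations.
Import ListNotations.
Set Implicit Arguments.

Section Defs.
Variable X : Type.
Definition set := X -> Prop.
Definition coll := set -> Prop.

Definition compl (A : set) : set := fun x => ~ A x.
Definition subset (A B : set) : Prop := forall x, A x -> B x.
Definition psubset (A B : set) : Prop := subset A B /\ A <> B.
Definition disjoint (A B : set) : Prop := forall x, ~ (A x /\ B x).

(* A^1 = A, A^{-1} = A^c ; true encodes 1, false encodes -1 *)
Definition corner (i : bool) (A : set) : set := if i then A else compl A.

Definition orth (A B : set) : Prop := disjoint A B /\ A <> compl B.

Definition maxorth (S : coll) (A B : set) : Prop :=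
  orth B A /\ ~ (exists C, S C /\ orth C A /\ psubset B C).

Definition cls (S : coll) (A : set) : coll :=
  fun B => B = A \/ (S B /\ maxorth S A B).

Definition sim (S : coll) (A B : set) : Prop := cls S B A.

Definition nested_pair (A B : set) : Prop :=
  exists i j : bool, disjoint (corner i A) (corner j B).
Definition nested (S : coll) : Prop :=
  forall A B, S A -> S B -> nested_pair A B.
Definition self_dual (S : coll) : Prop := forall A, S A -> S (compl A).
Definition nonempty_members (S : coll) : Prop := forall A, S A -> exists x, A x.

Definition incr_chain (f : nat -> set) : Prop := forall n, psubset (f n) (f (S n)).
Definition decr_chain (f : nat -> set) : Prop := forall n, psubset (f (S n)) (f n).

Definition vanishing_decr (S : coll) (f : nat -> set) : Prop :=
  ~ (exists B, S B /\ forall n, subset B (f n)).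
Definition vanishing_incr (S : coll) (f : nat -> set) : Prop :=
  ~ (exists B, S B /\ forall n, disjoint B (f n)).

Definition chain_vanishing (S : coll) : Prop :=
  forall f : nat -> set, (forall n, S (f n)) ->
    (incr_chain f -> vanishing_incr S f) /\ (decr_chain f -> vanishing_decr S f).

Definition equiv_on (S : coll) (R : set -> set -> Prop) : Prop :=
  (forall A, S A -> R A A) /\
  (forall A B, S A -> S B -> R A B -> R B A) /\
  (forall A B C, S A -> S B -> S C -> R A B -> R B C -> R A C).

(* The graph T_S: vertices are the classes [A]_S (A ∈ S); for each A with
   A, A^c ∈ S there is an (undirected) edge {[A]_S, [A^c]_S}; the edges given
   by A and by A^c are the same edge. *)
Definition vertex (S : coll) (v : coll) : Prop := exists A, S A /\ v = cls S A.
Definition adj (S : coll) (v w : coll) : Prop :=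
  exists A, S A /\ S (compl A) /\ v = cls S A /\ w = cls S (compl A).

Definition no_loops (S : coll) : Prop :=
  forall A, S A -> S (compl A) -> cls S A <> cls S (compl A).

Definition no_multi_edges (S : coll) : Prop :=
  forall A B, S A -> S (compl A) -> S B -> S (compl B) ->
    cls S A = cls S B -> cls S (compl A) = cls S (compl B) ->
    A = B \/ A = compl B.

Definition connected (S : coll) : Prop :=
  forall v w, vertex S v -> vertex S w -> clos_refl_trans _ (adj S) v w.

Fixpoint adj_path (S : coll) (l : list coll) : Prop :=
  match l with
  | v :: ((w :: _) as t) => adj S v w /\ adj_path S t
  | _ => True
  end.

(* no cycle v0 - v1 - ... - v_{n-1} - v0 with n >= 3 distinct vertices
   (cycles of length 1 and 2 are excluded by no_loops / no_multi_edges) *)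
Definition acyclic (S : coll) : Prop :=
  ~ (exists (l : list coll) (v0 vl : coll),
        3 <= length l /\ NoDup l /\ (forall v, In v l -> vertex S v) /\
        adj_path S l /\ hd_error l = Some v0 /\ last l v0 = vl /\ adj S vl v0).

Definition is_tree (S : coll) : Prop :=
  connected S /\ acyclic S /\ no_loops S /\ no_multi_edges S.
End Defs.

(* Main.v *)
Require Import Defs.
From Stdlib Require Import List Relations.
From Stdlib Require Import Classical FunctionalExtensionality PropExtensionality ClassicalEpsilon Lia.
Import ListNotations.

Lemma set_ext {X} (A B : set X) : (forall x, A x <-> B x) -> A = B.
Proof. intro H. apply functional_extensionality; intro x. apply propositional_extensionality; auto. Qed.

Lemma compl_compl {X} (A : set X) : compl (compl A) = A.
Proof. apply set_ext; intro x; unfold compl; split; [apply NNPP|tauto]. Qed.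

Lemma sub_antisym {X} (A B : set X) : subset A B -> subset B A -> A = B.
Proof. intros; apply set_ext; split; auto. Qed.

Lemma nested_cases {X} {A B : set X} : nested_pair A B ->
  disjoint A B \/ subset A B \/ subset B A \/ disjoint (compl A) (compl B).
Proof.
  intros [[|] [[|] H]]; simpl in H; unfold disjoint, subset in *.
  - left; auto.
  - right; left. intros x Ha; apply NNPP; intro Hb; apply (H x); split; auto.
  - right; right; left. intros x Hb; apply NNPP; intro Ha; apply (H x); split; auto.
  - right; right; right; auto.
Qed.

Lemma compl_inj {X} (A B : set X) : compl A = compl B -> A = B.
Proof. intro H. rewrite <- (compl_compl A), <- (compl_compl B), H; reflexivity. Qed.

Lemma maxorth_sym {X} (Sc : coll X) A B : self_dual Sc -> maxorth Sc A B -> maxorth Sc B A.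
Proof.
  intros HD [[Hdis Hne] Hmax]. split.
  - split. intros x [h1 h2]; apply (Hdis x); auto.
    intro E. apply Hne. rewrite E, compl_compl; reflexivity.
  - intros [C [HC [[HCd HCn] [HAC HAC']]]]. apply Hmax. exists (compl C).
    split; [apply HD; auto|]. split. split.
    + intros x [h1 h2]. apply h1, HAC, h2.
    + intro E. apply HAC'. symmetry. apply compl_inj; auto.
    + split. intros x hx hc. apply (HCd x); auto.
      intro E. apply HCn. rewrite E, compl_compl; reflexivity.
Qed.

Section Core.
Variable X : Type.
Variable Sc : coll X.
Hypothesis HN : nonempty_members Sc.
Hypothesis HD : self_dual Sc.
Hypothesis Hn : nested Sc.

Lemma maxorth_trans A B C : Sc A -> Sc B -> Sc C ->
  maxorth Sc B A -> maxorth Sc B C -> A <> C -> maxorth Sc C A.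
Proof.
  intros HA HB HC MA MC HAC.
  destruct MA as [[dAB nAB] mA]. destruct MC as [[dCB nCB] mC].
  destruct (HN _ HB) as [b Hb].
  assert (dAC : disjoint A C).
  { destruct (nested_cases (Hn _ _ HA HC)) as [h|[h|[h|h]]]; auto.
    - exfalso. apply mA. exists C. split; auto. split. split; auto. split; auto.
    - exfalso. apply mC. exists A. split; auto. split. split; auto. split; auto.
    - exfalso. apply (h b). split; intro; [apply (dAB b)|apply (dCB b)]; auto. }
  split. split; auto.
  - intro E. apply (dCB b). split; auto. apply NNPP; intro hc.
    apply (dAB b); split; auto. rewrite E; exact hc.
  - intros [D [HDD [[dDC nDC] [sAD nAD]]]].
    destruct (HN _ HA) as [a Ha].
    destruct (nested_cases (Hn _ _ HDD HB)) as [h|[h|[h|h]]].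
    + apply mA. exists D. split; auto. split; [split; auto|split; auto].
      intro E. destruct (HN _ HC) as [c Hc]. apply (dDC c). split; auto.
      rewrite E. intro hb. apply (dCB c); auto.
    + apply (dAB a). split; auto.
    + apply mC. exists (compl D). split; [apply HD; auto|].
      split. split.
      * intros x [h1 h2]. apply h1, h, h2.
      * intro E. apply compl_inj in E. subst D. apply (dAB a). split; auto.
      * split. intros x hx hd. apply (dDC x); auto.
        intro E. apply nDC. rewrite E, compl_compl; reflexivity.
    + destruct (HN _ HC) as [c Hc]. apply (h c). split.
      * intro hd. apply (dDC c); auto.
      * intro hb. apply (dCB c); auto.
Qed.

Lemma equiv_sim : equiv_on Sc (sim Sc).
Proof.
  unfold sim, cls. split; [|split].
  - intros; left; reflexivity.
  - intros A B HA HB [E|[_ M]]. left; auto. right; split; auto. apply maxorth_sym; auto.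
  - intros A B C HA HB HC [E|[_ M1]] H2. subst; auto.
    destruct H2 as [E|[_ M2]]. subst; right; auto.
    destruct (classic (A = C)) as [E|E]. left; auto.
    right; split; auto. apply (maxorth_trans A B C); auto. apply maxorth_sym; auto.
Qed.

Lemma sim_S A B : Sc B -> sim Sc A B -> Sc A.
Proof. intros HB [E|[H _]]; [subst|]; auto. Qed.

Lemma cls_eq D E : Sc D -> Sc E -> sim Sc D E -> cls Sc D = cls Sc E.
Proof.
  destruct equiv_sim as [_ [Hsym Htr]].
  intros HD0 HE H. apply set_ext; intro Y. change (sim Sc Y D <-> sim Sc Y E). split; intro h.
  - assert (HY : Sc Y) by (apply (sim_S Y D); auto).
    apply (Htr Y D E); auto.
  - assert (HY : Sc Y) by (apply (sim_S Y E); auto).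
    apply (Htr Y E D); auto.
Qed.

End Core.

Lemma no_desc {X} (Sc : coll X) A (P : set X -> Prop) :
  chain_vanishing Sc -> Sc A -> (forall B, P B -> Sc B /\ subset A B) ->
  (forall B, P B -> exists D, P D /\ psubset D B) -> forall B, ~ P B.
Proof.
  intros Hc HA HP Hst B0 HB0.
  assert (step : forall b : {B | P B}, {D | P D /\ psubset D (proj1_sig b)}).
  { intro b. apply constructive_indefinite_description. destruct b; simpl; auto. }
  set (h := fun b => exist P (proj1_sig (step b)) (proj1 (proj2_sig (step b)))).
  set (g := fun n => proj1_sig (Nat.iter n h (exist P B0 HB0))).
  destruct (Hc g) as [_ Hdec].
  - intro n. apply HP. unfold g. apply proj2_sig.
  - apply Hdec.
    + intro n. unfold g. simpl. exact (proj2 (proj2_sig (step _))).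
    + exists A. split; auto. intro n. apply HP. unfold g; apply proj2_sig.
Qed.

Lemma no_asc {X} (Sc : coll X) E (P : set X -> Prop) :
  chain_vanishing Sc -> Sc E -> (forall B, P B -> Sc B /\ disjoint E B) ->
  (forall B, P B -> exists D, P D /\ psubset B D) -> forall B, ~ P B.
Proof.
  intros Hc HE HP Hst B0 HB0.
  assert (step : forall b : {B | P B}, {D | P D /\ psubset (proj1_sig b) D}).
  { intro b. apply constructive_indefinite_description. destruct b; simpl; auto. }
  set (h := fun b => exist P (proj1_sig (step b)) (proj1 (proj2_sig (step b)))).
  set (g := fun n => proj1_sig (Nat.iter n h (exist P B0 HB0))).
  destruct (Hc g) as [Hinc _].
  - intro n. apply HP. unfold g. apply proj2_sig.
  - apply Hinc.
    + intro n. unfold g. simpl. exact (proj2 (proj2_sig (step _))).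
    + exists E. split; auto. intro n. apply HP. unfold g; apply proj2_sig.
Qed.

Lemma conn_sub {X} (Sc : coll X) : nonempty_members Sc -> self_dual Sc -> nested Sc ->
  chain_vanishing Sc -> forall A B, Sc A -> Sc B -> subset A B ->
  clos_refl_trans _ (adj Sc) (cls Sc A) (cls Sc B).
Proof.
  intros HN HD Hn Hc A B HA HB HAB. apply NNPP; intro Hnot.
  apply (@no_desc X Sc A (fun B => Sc B /\ subset A B /\
     ~ clos_refl_trans _ (adj Sc) (cls Sc A) (cls Sc B)) Hc HA) with B; [ | | auto].
  - intros; tauto.
  - intros B' [HB' [HAB' Hn']].
    assert (NE : A <> B') by (intro; subst; apply Hn'; apply rt_refl).
    assert (Hmax : exists D, (Sc D /\ subset A D /\ psubset D B') /\
              forall C, Sc C -> subset A C -> psubset C B' -> ~ psubset D C).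
    { apply NNPP; intro Hno.
      apply (@no_asc X Sc (compl B') (fun D => Sc D /\ subset A D /\ psubset D B') Hc (HD _ HB')) with A.
      - intros C [HC [_ [HCB _]]]; split; auto. intros x [h1 h2]; apply h1, HCB, h2.
      - intros C HC. apply NNPP; intro H2. apply Hno. exists C. split; auto.
        intros C' h1 h2 h3 h4. apply H2. exists C'; auto.
      - split; auto. split. intros x h; auto. split; auto. }
    destruct Hmax as [D [[HD' [HAD [HDB HDB']]] Hmx]].
    exists D. split; [ | split; auto].
    split; auto. split; [exact HAD|].
    intro Hr. apply Hn'.
    assert (Hm : maxorth Sc (compl B') D).
    { split. split.
      - intros x [h1 h2]. apply h2. apply HDB; auto.
      - rewrite compl_compl; auto.
      - intros [C [HC [[Hdisj Hneq] Hps]]]. apply (Hmx C HC).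
        + intros x hx. apply (proj1 Hps). apply HAD; auto.
        + split. intros x hx. apply NNPP; intro. apply (Hdisj x); split; auto.
          rewrite compl_compl in Hneq; auto.
        + auto. }
    assert (Heq : cls Sc D = cls Sc (compl B')).
    { apply cls_eq; auto. right; split; auto. }
    apply rt_trans with (cls Sc D); auto. rewrite Heq. apply rt_step.
    exists (compl B'). split; [apply HD; auto|]. split. rewrite compl_compl; auto.
    split; auto. rewrite compl_compl; auto.
Qed.

Lemma adj_sym {X} (Sc : coll X) v w : adj Sc v w -> adj Sc w v.
Proof.
  intros [A [h1 [h2 [h3 h4]]]]. exists (compl A). rewrite compl_compl. auto.
Qed.

Lemma rt_sym' {X} (Sc : coll X) v w :
  clos_refl_trans _ (adj Sc) v w -> clos_refl_trans _ (adj Sc) w v.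
Proof.
  induction 1. apply rt_step, adj_sym; auto. apply rt_refl. eapply rt_trans; eauto.
Qed.

Lemma adj_path_nth {X} (Sc : coll X) l d : adj_path Sc l ->
  forall i, S i < length l -> adj Sc (nth i l d) (nth (S i) l d).
Proof.
  induction l as [|v t IH]; intros H i Hi. simpl in Hi; lia.
  destruct t as [|w t']. simpl in Hi; lia.
  destruct H as [H1 H2]. destruct i. simpl; exact H1.
  simpl. apply IH; [exact H2| simpl in *; lia].
Qed.

Lemma last_nth {A} (l : list A) d : l <> [] -> last l d = nth (length l - 1) l d.
Proof.
  induction l as [|a t IH]; intro H. contradiction.
  destruct t as [|b t']. reflexivity.
  transitivity (last (b::t') d); [reflexivity|]. rewrite IH by discriminate.
  simpl. replace (length t' - 0) with (length t') by lia. reflexivity.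
Qed.

Lemma step_sub {X} (Sc : coll X) E E' :
  cls Sc (compl E) = cls Sc E' -> cls Sc E <> cls Sc (compl E') -> psubset E' E.
Proof.
  intros H1 H2.
  assert (h : cls Sc E' E') by (left; reflexivity).
  rewrite <- H1 in h. destruct h as [h|[_ [[hd hn] _]]].
  - exfalso. apply H2. rewrite h, compl_compl. reflexivity.
  - split. intros x hx. apply NNPP; intro. apply (hd x); split; auto.
    rewrite compl_compl in hn; auto.
Qed.

Theorem mainTheorem5 (X : Type) (S : coll X) :
  (exists A, S A) ->
  nonempty_members S ->
  self_dual S ->
  nested S ->
  chain_vanishing S ->
  equiv_on S (sim S) /\ is_tree S.
Proof.
  intros _ HN HD Hn Hc. split; [apply equiv_sim; auto|].
  split; [|split; [|split]].
  - intros v w [A [HA ->]] [B [HB ->]].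
    destruct (nested_cases (Hn _ _ HA HB)) as [h|[h|[h|h]]].
    + apply rt_trans with (cls S (compl B)).
      * apply conn_sub; auto. intros x hx hb. apply (h x); auto.
      * apply rt_step, adj_sym. exists B. auto.
    + apply conn_sub; auto.
    + apply rt_sym', conn_sub; auto.
    + apply rt_trans with (cls S (compl A)).
      * apply rt_step. exists A. auto.
      * apply conn_sub; auto. intros x hx. apply NNPP; intro hb. apply (h x); auto.
  - intros [l [v0 [vl [Hlen [Hnd [_ [Hp [Hhd [Hl Hadj]]]]]]]]].
    set (n := length l) in *.
    set (w := fun i => nth i l v0).
    assert (Hw0 : w 0 = v0) by (unfold w; clear -Hhd; destruct l; simpl in *; congruence).
    assert (Hwl : w (n - 1) = vl).
    { rewrite <- Hl. unfold w, n. symmetry. apply last_nth. intro E; unfold n in Hlen; rewrite E in Hlen; simpl in Hlen; lia. }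
    assert (Hinj : forall i j, i < n -> j < n -> w i = w j -> i = j).
    { intros. eapply NoDup_nth; eauto. }
    assert (Ha : forall i, Datatypes.S i < n -> adj S (w i) (w (Datatypes.S i))).
    { intros; apply adj_path_nth; auto. }
    destruct (Ha 0 ltac:(lia)) as [E0 [_ [_ [h0 h1]]]]. symmetry in h0, h1.
    assert (Hind : forall k, k + 1 <= n - 1 -> exists G,
              cls S G = w k /\ cls S (compl G) = w (k + 1) /\ subset G E0).
    { induction k as [|k IH]; intro Hk.
      - exists E0. split; auto. split; auto. intros x hx; auto.
      - destruct IH as [G [g1 [g2 g3]]]. lia.
        destruct (Ha (Datatypes.S k) ltac:(lia)) as [G' [_ [_ [g4 g5]]]]. symmetry in g4, g5.
        exists G'. split. rewrite g4; f_equal; lia. split. rewrite g5; f_equal; lia.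
        assert (P : psubset G' G).
        { apply (step_sub S). rewrite g2, g4; f_equal; lia.
          rewrite g1, g5. intro E. apply Hinj in E; lia. }
        intros x hx. apply g3, (proj1 P), hx. }
    destruct (Hind (n - 2) ltac:(lia)) as [G [g1 [g2 g3]]].
    replace (n - 2 + 1) with (n - 1) in g2 by lia.
    destruct Hadj as [Ec [_ [_ [e1 e2]]]]. symmetry in e1, e2.
    assert (P1 : psubset Ec G).
    { apply (step_sub S). rewrite g2, e1; auto.
      rewrite g1, e2, <- Hw0. intro E. apply Hinj in E; lia. }
    assert (P2 : psubset E0 Ec).
    { apply (step_sub S). rewrite e2, h0, Hw0; auto.
      rewrite e1, h1, <- Hwl. intro E. apply Hinj in E; lia. }
    apply (proj2 P2). apply sub_antisym. apply (proj1 P2).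
    intros x hx. apply g3, (proj1 P1), hx.
  - intros A HA HAc E.
    assert (h : cls S (compl A) A) by (rewrite <- E; left; reflexivity).
    destruct h as [h|[_ [[_ hn] _]]].
    + destruct (HN _ HA) as [x hx]. assert (hx' := hx).
      rewrite h in hx'. exact (hx' hx).
    + apply hn. rewrite compl_compl; reflexivity.
  - intros A B HA HAc HB HBc E1 E2.
    assert (h1 : cls S A B) by (rewrite E1; left; reflexivity).
    assert (h2 : cls S (compl A) (compl B)) by (rewrite E2; left; reflexivity).
    destruct h1 as [h1|[_ [[d1 _] _]]]. left; auto.
    destruct h2 as [h2|[_ [[d2 _] _]]]. left; symmetry; apply compl_inj; auto.
    right. apply set_ext; intro x; split.
    + intros ha hb. apply (d1 x); auto.
    + intro hb. apply NNPP; intro ha. apply (d2 x); auto.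
Qed.
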